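(* Let $\mathcal{C}$ be a category with a faithful functor $Q:\mathcal{C}\to\mathbf{Set}$ for which there exist an object $A_0$ and an element $x_0\in Q(A_0)$ satisfying (1Q) and (2Q) below. Then every automorphism of $\mathcal{C}$ is potentially quasi-inner.
   Context: (1Q): for every object $A$ of $\mathcal{C}$ and every $a\in Q(A)$ there is exactly one morphism $\alpha:A_0\to A$ with $Q(\alpha)(x_0)=a$. (2Q): for every object $A$ there is a morphism $\alpha:A\to A_0$ such that $Q(\alpha)$ is surjective. For objects $A,B$, a map $s:Q(A)\to Q(B)$ is a $\mathcal{C}$-bijection if $s$ is injective and for any two morphisms $\alpha_1,\alpha_2:B\to C$ of $\mathcal{C}$, $Q(\alpha_1)\circ s=Q(\alpha_2)\circ s$ implies $\alpha_1=\alpha_2$. An automorphism $\Phi$ of $\mathcal{C}$ is potentially quasi-inner if there exists a family of $\mathcal{C}$-bijections $s_A:Q(A)\to Q(\Phi(A))$, $A\in\mathrm{Ob}\,\mathcal{C}$, such that $Q(\Phi(\mu))\circ s_A=s_B\circ Q(\mu)$ for every morphism $\mu:A\to B$. *)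

(* Defs.v *)
Record Category := {
  Ob :> Type;
  Hom : Ob -> Ob -> Type;
  idm : forall A : Ob, Hom A A;
  comp : forall A B C : Ob, Hom B C -> Hom A B -> Hom A C;
  comp_id_l : forall A B (f : Hom A B), comp A B B (idm B) f = f;
  comp_id_r : forall A B (f : Hom A B), comp A A B f (idm A) = f;
  comp_assoc : forall A B C D (h : Hom C D) (g : Hom B C) (f : Hom A B),
      comp A C D h (comp A B C g f) = comp A B D (comp B C D h g) f
}.

Arguments Hom {c} A B.
Arguments idm {c} A.
Arguments comp {c} {A B C} g f.

Record SetFunctor (C : Category) := {
  Fob :> C -> Type;
  Fmap : forall (A B : C), Hom A B -> Fob A -> Fob B;
  Fmap_id : forall (A : C) (x : Fob A), Fmap A A (idm A) x = x;
  Fmap_comp : forall (A B D : C) (g : Hom B D) (f : Hom A B) (x : Fob A),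
      Fmap A D (comp g f) x = Fmap B D g (Fmap A B f x)
}.

Arguments Fob {C} s _.
Arguments Fmap {C} s {A B} _ _.

Definition faithful {C : Category} (Q : SetFunctor C) : Prop :=
  forall (A B : C) (f g : Hom A B),
    (forall x, Fmap Q f x = Fmap Q g x) -> f = g.

Record Endofunctor (C : Category) := {
  Eob :> C -> C;
  Emap : forall (A B : C), Hom A B -> Hom (Eob A) (Eob B);
  Emap_id : forall (A : C), Emap A A (idm A) = idm (Eob A);
  Emap_comp : forall (A B D : C) (g : Hom B D) (f : Hom A B),
      Emap A D (comp g f) = comp (Emap B D g) (Emap A B f)
}.

Arguments Eob {C} e _ : rename.
Arguments Emap {C} e {A B} _ : rename.

(* Composite G o F is the identity functor, with equality of morphisms
   taken in the total space of all morphisms (to handle the dependency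
   of hom-types on the objects). *)
Definition inverse_left {C : Category} (G F : Endofunctor C) : Prop :=
  (forall A : C, Eob G (Eob F A) = A) /\
  (forall (A B : C) (f : Hom A B),
     existT (fun p : C * C => Hom (fst p) (snd p))
            (Eob G (Eob F A), Eob G (Eob F B)) (Emap G (Emap F f))
     = existT (fun p : C * C => Hom (fst p) (snd p)) (A, B) f).

Definition automorphism {C : Category} (F : Endofunctor C) : Prop :=
  exists G : Endofunctor C, inverse_left G F /\ inverse_left F G.

Definition cond1Q {C : Category} (Q : SetFunctor C) (A0 : C) (x0 : Q A0) : Prop :=
  forall (A : C) (a : Q A),
    exists alpha : Hom A0 A, Fmap Q alpha x0 = a /\
      forall beta : Hom A0 A, Fmap Q beta x0 = a -> beta = alpha.

Definition cond2Q {C : Category} (Q : SetFunctor C) (A0 : C) : Prop :=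
  forall A : C, exists alpha : Hom A A0,
    forall y : Q A0, exists x : Q A, Fmap Q alpha x = y.

Definition C_bijection {C : Category} (Q : SetFunctor C) (A B : C)
    (s : Q A -> Q B) : Prop :=
  (forall x y, s x = s y -> x = y) /\
  (forall (D : C) (a1 a2 : Hom B D),
     (forall x, Fmap Q a1 (s x) = Fmap Q a2 (s x)) -> a1 = a2).

Definition potentially_quasi_inner {C : Category} (Q : SetFunctor C)
    (Phi : Endofunctor C) : Prop :=
  exists s : forall A : C, Q A -> Q (Eob Phi A),
    (forall A : C, C_bijection Q A (Eob Phi A) (s A)) /\
    (forall (A B : C) (mu : Hom A B) (x : Q A),
       Fmap Q (Emap Phi mu) (s A x) = s B (Fmap Q mu x)).

(* Main.v *)
Require Import Defs.
From Stdlib Require Import ClassicalEpsilon Eqdep.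

Definition jepi {C : Category} {I : Type} {X Y : C} (h : I -> Hom X Y) : Prop :=
  forall (Z : C) (f g : Hom Y Z), (forall i, comp f (h i) = comp g (h i)) -> f = g.

Lemma je_cast {C : Category} (X' Y' X Y : C) (pX : X' = X) (pY : Y' = Y)
  (I : Type) (k : I -> Hom X' Y') (h : I -> Hom X Y) :
  (forall i, existT (fun p : C * C => Hom (fst p) (snd p)) (X', Y') (k i)
             = existT (fun p : C * C => Hom (fst p) (snd p)) (X, Y) (h i)) ->
  jepi h -> jepi k.
Proof.
  subst. intros E J Z f g H. apply J; intro i.
  rewrite <- (inj_pair2 _ _ _ _ _ (E i)). apply H.
Qed.

Lemma emap_inj {C : Category} (G F : Endofunctor C) : inverse_left G F ->
  forall (A B : C) (f g : Hom A B), Emap F f = Emap F g -> f = g.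
Proof.
  intros [_ H2] A B f g E.
  pose proof (H2 A B f) as Ef. pose proof (H2 A B g) as Eg.
  rewrite E in Ef. rewrite Ef in Eg.
  exact (inj_pair2 _ _ _ _ _ Eg).
Qed.

Lemma transfer {C : Category} (F G : Endofunctor C) :
  inverse_left G F -> inverse_left F G ->
  forall (I : Type) (X Y : C) (h : I -> Hom X Y), jepi h ->
  forall (Z : C) (a1 a2 : Hom (Eob F Y) Z),
    (forall i, comp a1 (Emap F (h i)) = comp a2 (Emap F (h i))) -> a1 = a2.
Proof.
  intros HGF HFG I X Y h J Z a1 a2 H.
  apply (emap_inj F G HFG).
  assert (J' : jepi (fun i => Emap G (Emap F (h i)))).
  { apply (je_cast _ _ X Y (proj1 HGF X) (proj1 HGF Y) I _ h); auto.
    intro i. apply (proj2 HGF). }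
  apply J'. intro i. rewrite <- !Emap_comp. rewrite H. reflexivity.
Qed.

Lemma point_cast {C : Category} (Q : SetFunctor C) (A0 : C) (x0 : Q A0) :
  cond1Q Q A0 x0 -> forall X : C, X = A0 ->
  exists z : Q X, forall (Y : C) (f g : Hom X Y), Fmap Q f z = Fmap Q g z -> f = g.
Proof.
  intros H1 X p. subst. exists x0. intros Y f g E.
  destruct (H1 Y (Fmap Q f x0)) as [al [_ U]].
  rewrite (U f eq_refl). symmetry. apply U. auto.
Qed.

Theorem theorem1 (C : Category) (Q : SetFunctor C) :
  faithful Q ->
  (exists (A0 : C) (x0 : Q A0), cond1Q Q A0 x0 /\ cond2Q Q A0) ->
  forall Phi : Endofunctor C, automorphism Phi -> potentially_quasi_inner Q Phi.
Proof.
  intros HF [A0 [x0 [H1 H2]]] Phi [G [HGP HPG]].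
  set (B := Eob G A0).
  destruct (H2 B) as [gam Hgam].
  destruct (point_cast Q A0 x0 H1 (Eob Phi B) (proj1 HPG A0)) as [z0 Hz0].
  set (alpha := fun (A : C) (a : Q A) => proj1_sig (constructive_indefinite_description _ (H1 A a))).
  assert (Hal1 : forall A a, Fmap Q (alpha A a) x0 = a).
  { intros A a. unfold alpha. destruct (constructive_indefinite_description _ _) as [al [P P2]]. exact P. }
  assert (Hal2 : forall A a (b : Hom A0 A), Fmap Q b x0 = a -> b = alpha A a).
  { intros A a b. unfold alpha. destruct (constructive_indefinite_description _ _) as [al [P2 P]]. exact (P b). }
  assert (Gepi : forall Z (f g : Hom A0 Z), comp f gam = comp g gam -> f = g).
  { intros Z f g E. apply HF. intro y. destruct (Hgam y) as [x <-].
    rewrite <- !Fmap_comp, E. reflexivity. }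
  exists (fun A a => Fmap Q (Emap Phi (comp (alpha A a) gam)) z0).
  split.
  - intro A. split.
    + intros a a' E. apply Hz0 in E. apply (emap_inj G Phi HGP) in E.
      apply Gepi in E. rewrite <- (Hal1 A a), <- (Hal1 A a'), E. reflexivity.
    + intros D a1 a2 H.
      apply (transfer Phi G HGP HPG (Q A) B A (fun x => comp (alpha A x) gam)).
      * intros Z f g E. apply HF. intro x. rewrite <- (Hal1 A x).
        rewrite <- !Fmap_comp. f_equal. apply Gepi. rewrite <- !comp_assoc. apply E.
      * intro x. apply Hz0. rewrite !Fmap_comp. apply H.
  - intros A A' mu x. rewrite <- Fmap_comp, <- Emap_comp.
    rewrite <- (Hal2 A' (Fmap Q mu x) (comp mu (alpha A x))).
    + rewrite comp_assoc. reflexivity.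
    + rewrite Fmap_comp, Hal1. reflexivity.
Qed.
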